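(* In the two-tier residency matching game described in the context with any list length $K\ge 1$ and $v\ge e/(e-1)$, under the large market approximation, the social welfare of the symmetric Nash equilibrium is at least half of the OPTIMUM welfare $2(v+r)n$; i.e., the loss of efficiency of equilibrium compared to OPTIMUM is at most a factor of $2$.
   Context: Model: there are $n$ high-tier and $rn$ low-tier doctors ($r>0$), and $n$ high-tier and $rn$ low-tier hospitals, each with one position. Every hospital prefers every high doctor to every low doctor and every doctor prefers every high hospital to every low hospital; within a tier, preferences are independent uniformly random permutations. Each doctor submits a ranked list of exactly $K$ hospitals: a strategy $(k,K-k)$ lists his $k$ most preferred high hospitals followed by his $K-k$ most preferred low hospitals. Hospitals submit full true rankings; doctor-proposing deferred acceptance is run. Values: a doctor gets $v>1$ if matched to a high hospital, $1$ if matched to a low one, $0$ if unmatched; a hospital gets $v$ if matched to a high doctor, $1$ if matched to a low doctor, $0$ if unfilled. Social welfare is the sum of the values of all doctors and hospitals. Large market approximation: $n\to\infty$ with $r,K,v$ fixed, and each application to a hospital is accepted independently with a probability determined by the aggregate strategy profile through fixed-point equations (expected matched doctors = expected hospitals receiving at least one admissible application; a hospital receiving on average $\lambda$ applications gets none with probability $e^{-\lambda}$; low doctors' applications to hospitals already taken by high doctors are rejected). Equilibrium: symmetric Nash equilibrium, all doctors of a tier using the same (possibly mixed) strategy, each maximizing expected value given the acceptance probabilities. OPTIMUM: the welfare $2(v+r)n$ of the matching in which every high doctor is matched to a high hospital and every low doctor to a low hospital (the deferred acceptance outcome with full lists). *)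

(* Defs.v *)
From Stdlib Require Import Reals.
Open Scope R_scope.

Fixpoint geom (q : R) (m : nat) : R :=
  match m with
  | O => 0
  | S m' => geom q m' + q ^ m'
  end.

Definition sumK (K : nat) (f : nat -> R) : R := sum_f_R0 f K.

(* probability that at least one of m applications (each accepted
   independently with probability a) is accepted *)
Definition pmatch (a : R) (m : nat) : R := 1 - (1 - a) ^ m.

(* expected number of applications actually sent when going down a list of m
   hospitals, stopping at the first acceptance *)
Definition napps (a : R) (m : nat) : R := geom (1 - a) m.

(* A mixed strategy: x k = probability of strategy (k, K-k), k = 0..K. *)
Definition mixed (K : nat) (x : nat -> R) : Prop :=
  (forall k, (k <= K)%nat -> 0 <= x k) /\ sumK K x = 1.

Section Model.
Variables (K : nat) (r v : R) (x y : nat -> R) (aHH aHL aLH aLL : R).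
(* x : mixed strategy of high doctors, y : of low doctors.
   aHH / aHL : acceptance prob. of a high doctor's application to a high / low
   hospital; aLH / aLL : same for a low doctor. *)

(* Prob. that a high (resp. low) doctor using (k, K-k) matches to a high /
   low hospital. *)
Definition pHH (k : nat) : R := pmatch aHH k.
Definition pHL (k : nat) : R := (1 - aHH) ^ k * pmatch aHL (K - k).
Definition pLH (k : nat) : R := pmatch aLH k.
Definition pLL (k : nat) : R := (1 - aLH) ^ k * pmatch aLL (K - k).

Definition utilH (k : nat) : R := v * pHH k + 1 * pHL k.
Definition utilL (k : nat) : R := v * pLH k + 1 * pLL k.

(* Expected numbers of matched pairs, divided by n
   (there are n high doctors and r n low doctors). *)
Definition MHH : R := sumK K (fun k => x k * pHH k).
Definition MHL : R := sumK K (fun k => x k * pHL k).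
Definition MLH : R := r * sumK K (fun k => y k * pLH k).
Definition MLL : R := r * sumK K (fun k => y k * pLL k).

(* Average number of applications received per hospital. *)
(* high doctors -> each of the n high hospitals *)
Definition lamHH : R := sumK K (fun k => x k * napps aHH k).
(* high doctors -> each of the r n low hospitals *)
Definition lamHL : R :=
  sumK K (fun k => x k * ((1 - aHH) ^ k * napps aHL (K - k))) / r.
(* low doctors -> each high hospital (applications are spread uniformly, so a
   high hospital not taken by high doctors receives this many on average) *)
Definition muH : R := r * sumK K (fun k => y k * napps aLH k) / 1.
(* low doctors -> each low hospital *)
Definition muL : R :=
  r * sumK K (fun k => y k * ((1 - aLH) ^ k * napps aLL (K - k))) / r.

(* Fixed-point equations of the large market approximation:
   expected matched doctors = expected hospitals receiving at least one
   admissible application (Poisson: none with probability exp(-lambda));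
   low doctors' applications to hospitals taken by high doctors are
   rejected, so only the fraction exp(-lamHH) (resp. exp(-lamHL)) of high
   (resp. low) hospitals is available to low doctors.
   When an acceptance probability is not determined because no application
   is ever sent (zero load), it is fixed to its limit value (1 for high
   doctors, the fraction of hospitals not taken by high doctors for low
   doctors). *)
Definition fixed_point : Prop :=
  (0 <= aHH <= 1 /\ 0 <= aHL <= 1 /\ 0 <= aLH <= 1 /\ 0 <= aLL <= 1) /\
  (MHH = 1 - exp (- lamHH) /\
   MHL = r * (1 - exp (- lamHL)) /\
   MLH = exp (- lamHH) * (1 - exp (- muH)) /\
   MLL = r * (exp (- lamHL) * (1 - exp (- muL)))) /\
  ((lamHH = 0 -> aHH = 1) /\
   (lamHL = 0 -> aHL = 1) /\
   (muH = 0 -> aLH = exp (- lamHH)) /\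
   (muL = 0 -> aLL = exp (- lamHL))).

Definition sym_equilibrium : Prop :=
  mixed K x /\ mixed K y /\ fixed_point /\
  (forall k, (k <= K)%nat -> 0 < x k ->
     forall k', (k' <= K)%nat -> utilH k' <= utilH k) /\
  (forall k, (k <= K)%nat -> 0 < y k ->
     forall k', (k' <= K)%nat -> utilL k' <= utilL k).

Definition doctors_welfare : R := v * MHH + 1 * MHL + v * MLH + 1 * MLL.
Definition hospitals_welfare : R := v * MHH + 1 * MLH + v * MHL + 1 * MLL.
Definition social_welfare : R := doctors_welfare + hospitals_welfare.

End Model.

Definition optimum (r v : R) : R := 2 * (v + r).

(* Main.v *)
Require Import Defs.
From Stdlib Require Import Reals Lra Lia Psatz.
Open Scope R_scope.

Lemma geom_id q m : (1 - q) * geom q m = 1 - q ^ m.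
Proof. induction m; simpl; [ring|]. rewrite Rmult_plus_distr_l, IHm. ring. Qed.

Lemma pm_napps a m : pmatch a m = a * napps a m.
Proof. unfold pmatch, napps. rewrite <- geom_id. ring. Qed.

Lemma geom_nonneg q m : 0 <= q -> 0 <= geom q m.
Proof. intro Hq. induction m; simpl; [lra|]. pose proof (pow_le q m Hq). lra. Qed.

Lemma napps_nonneg a m : 0 <= a <= 1 -> 0 <= napps a m.
Proof. intros. apply geom_nonneg. lra. Qed.

Lemma pm_nonneg a m : 0 <= a <= 1 -> 0 <= pmatch a m.
Proof. intros. rewrite pm_napps. pose proof (napps_nonneg a m H). nra. Qed.

Lemma pow_le1 q m : 0 <= q <= 1 -> q ^ m <= 1.
Proof. intros H. induction m; simpl; [lra|]. pose proof (pow_le q m ltac:(lra)). nra. Qed.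

Lemma pm_ge a m : 0 <= a <= 1 -> (1 <= m)%nat -> a <= pmatch a m.
Proof.
  intros Ha Hm. unfold pmatch. destruct m as [|m]; [lia|]. simpl.
  assert ((1 - a) ^ m <= 1) by (apply pow_le1; lra). nra.
Qed.

Lemma sum_mul_l c f N : sum_f_R0 (fun k => c * f k) N = c * sum_f_R0 f N.
Proof. induction N; simpl; [ring|]. rewrite IHN. ring. Qed.

Lemma sum_nonneg f N : (forall k, (k <= N)%nat -> 0 <= f k) -> 0 <= sum_f_R0 f N.
Proof.
  induction N; intros H; simpl. apply H; lia.
  assert (0 <= sum_f_R0 f N) by (apply IHN; intros; apply H; lia).
  assert (0 <= f (S N)) by (apply H; lia). lra.
Qed.

Lemma best_resp K x f k' : mixed K x -> (k' <= K)%nat ->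
  (forall k, (k <= K)%nat -> 0 < x k -> forall k2, (k2 <= K)%nat -> f k2 <= f k) ->
  f k' <= sumK K (fun k => x k * f k).
Proof.
  intros [Hx Hs] Hk' H. unfold sumK in *.
  apply Rle_trans with (sum_f_R0 (fun k => f k' * x k) K).
  - rewrite sum_mul_l, Hs. lra.
  - apply sum_Rle. intros n Hn. destruct (Hx n Hn) as [Hp|Hz].
    + specialize (H n Hn Hp k' Hk'). nra.
    + rewrite <- Hz. lra.
Qed.

Lemma texp t : t * exp (- t) <= 1 - exp (- t).
Proof.
  pose proof (exp_ineq1_le t). pose proof (exp_pos (- t)).
  assert (exp t * exp (- t) = 1) by (rewrite <- exp_plus; replace (t + - t) with 0 by ring; apply exp_0).
  nra.
Qed.

Lemma key a lam B : 0 <= lam -> 0 <= B -> a * lam = B * (1 - exp (- lam)) ->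
  (lam = 0 -> a = B) -> B * exp (- lam) <= a.
Proof.
  intros Hl HB E Z. destruct Hl as [Hl|Hl].
  - pose proof (texp lam).
    assert (B * exp (- lam) * lam <= a * lam) by nra.
    apply Rmult_le_reg_r with lam; auto.
  - subst lam. rewrite Z by auto. rewrite Ropp_0, exp_0. lra.
Qed.

Theorem theorem2 :
  forall (K : nat) (r v : R),
    (1 <= K)%nat -> 0 < r -> 1 < v -> exp 1 / (exp 1 - 1) <= v ->
    forall (x y : nat -> R) (aHH aHL aLH aLL : R),
      sym_equilibrium K r v x y aHH aHL aLH aLL ->
      optimum r v / 2 <= social_welfare K r v x y aHH aHL aLH aLL.
Proof.
  intros K r v HK Hr Hv Hev x y aHH aHL aLH aLL Heq.
  destruct Heq as [Hx [Hy [Hfp [HbrH HbrL]]]].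
  destruct Hfp as [[a1 [a2 [a3 a4]]] [[E1 [E2 [E3 E4]]] [Z1 [Z2 [Z3 Z4]]]]].
  pose proof Hx as [Hx0 _]. pose proof Hy as [Hy0 _].
  assert (DH : v * MHH K x aHH + 1 * MHL K x aHH aHL = sumK K (fun k => x k * utilH K v aHH aHL k)).
  { unfold MHH, MHL, utilH, sumK. rewrite <- sum_mul_l, <- sum_mul_l, <- sum_plus.
    apply sum_eq; intros; ring. }
  assert (DL : v * MLH K r y aLH + 1 * MLL K r y aLH aLL = r * sumK K (fun k => y k * utilL K v aLH aLL k)).
  { unfold MLH, MLL, utilL, sumK. rewrite <- !sum_mul_l, <- sum_plus.
    apply sum_eq; intros; ring. }
  assert (BH : utilH K v aHH aHL K <= sumK K (fun k => x k * utilH K v aHH aHL k)).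
  { apply best_resp; auto. }
  assert (BL : utilL K v aLH aLL 0 <= sumK K (fun k => y k * utilL K v aLH aLL k)).
  { apply best_resp; auto. lia. }
  assert (UH : v * aHH <= utilH K v aHH aHL K).
  { unfold utilH, pHH, pHL. pose proof (pm_ge aHH K a1 HK).
    pose proof (pm_nonneg aHL (K - K) a2). pose proof (pow_le (1 - aHH) K ltac:(lra)). nra. }
  assert (UL : aLL <= utilL K v aLH aLL 0).
  { unfold utilL, pLH, pLL. rewrite Nat.sub_0_r. pose proof (pm_ge aLL K a4 HK).
    unfold pmatch at 1. simpl. lra. }
  assert (M1 : MHH K x aHH = aHH * lamHH K x aHH).
  { unfold MHH, lamHH, pHH, sumK. rewrite <- sum_mul_l. apply sum_eq; intros.
    rewrite pm_napps. ring. }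
  assert (L1 : 0 <= lamHH K x aHH).
  { unfold lamHH, sumK. apply sum_nonneg. intros. pose proof (Hx0 k H).
    pose proof (napps_nonneg aHH k a1). nra. }
  assert (K1 : 1 * exp (- lamHH K x aHH) <= aHH).
  { apply key; auto; lra. }
  assert (M4 : MLL K r y aLH aLL = r * (aLL * muL K r y aLH aLL)).
  { assert (Hm : muL K r y aLH aLL = sumK K (fun k => y k * ((1 - aLH) ^ k * napps aLL (K - k))))
      by (unfold muL; field; lra).
    rewrite Hm. unfold MLL, pLL, sumK. rewrite <- !sum_mul_l.
    apply sum_eq; intros. rewrite pm_napps. ring. }
  assert (L4 : 0 <= muL K r y aLH aLL).
  { unfold muL, sumK. apply Rmult_le_pos; [|left; apply Rinv_0_lt_compat; lra].
    apply Rmult_le_pos; [lra|]. apply sum_nonneg. intros. pose proof (Hy0 k H).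
    pose proof (napps_nonneg aLL (K - k) a4). pose proof (pow_le (1 - aLH) k ltac:(lra)).
    apply Rmult_le_pos; auto. apply Rmult_le_pos; auto. }
  assert (K4 : exp (- lamHL K r x aHH aHL) * exp (- muL K r y aLH aLL) <= aLL).
  { apply key; auto. left; apply exp_pos. apply Rmult_eq_reg_l with r; [|lra].
    rewrite <- M4, E4. ring. }
  assert (N2 : 0 <= MHL K x aHH aHL).
  { unfold MHL, sumK. apply sum_nonneg. intros. pose proof (Hx0 k H).
    pose proof (pm_nonneg aHL (K - k) a2). pose proof (pow_le (1 - aHH) k ltac:(lra)).
    unfold pHL. apply Rmult_le_pos; auto. apply Rmult_le_pos; auto. }
  assert (N3 : 0 <= MLH K r y aLH).
  { unfold MLH, sumK. apply Rmult_le_pos; [lra|]. apply sum_nonneg. intros.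
    pose proof (Hy0 k H). pose proof (pm_nonneg aLH k a3). unfold pLH. nra. }
  unfold social_welfare, doctors_welfare, hospitals_welfare, optimum.
  set (A := exp (- lamHH K x aHH)) in *.
  set (B := exp (- lamHL K r x aHH aHL)) in *.
  set (C := exp (- muL K r y aLH aLL)) in *.
  assert (v * A <= v * aHH) by nra.
  assert (r * (B * C) <= r * aLL) by nra.
  assert (r * utilL K v aLH aLL 0 <= r * sumK K (fun k => y k * utilL K v aLH aLL k)) by nra.
  assert (r * aLL <= r * utilL K v aLH aLL 0) by nra.
  assert (MHL K x aHH aHL <= v * MHL K x aHH aHL) by nra.
  assert (v * MHH K x aHH = v - v * A) by (rewrite E1; ring).
  assert (MLL K r y aLH aLL = r * B - r * (B * C)) by (rewrite E4; ring).
  lra.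
Qed.
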